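(* Let $G$ be an edge-colored graph of order $n\geq 2$. If $e(G)+c(G)=\binom{n+1}{2}-1$ and $G$ contains no rainbow triangle, then $G$ is complete and contains a vertex $u$ such that $d^s(u)=1$.
   Context: An edge-colored graph is a finite simple graph $G$ with a map $C:E(G)\to\mathbb{N}$. $e(G)=|E(G)|$, $c(G)$ is the number of distinct colors appearing on $E(G)$. A subgraph is rainbow if all its edges have distinct colors. For $v\in V(G)$, the color saturated degree is $d^s(v)=c(G)-c(G-v)$, i.e. the number of colors all of whose edges are incident to $v$. *)

(* Defs.v *)
From mathcomp Require Import all_boot.
Set Implicit Arguments. Unset Strict Implicit. Unset Printing Implicit Defensive.

(* An edge-colored finite simple graph on vertex type T:
   adjacency e (symmetric, irreflexive) and a colouring C of edges given as a
   symmetric function on pairs (its values on non-edges are irrelevant). *)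
Record ecgraph (T : finType) := ECGraph {
  adj : rel T;
  col : T -> T -> nat;
  adj_sym : symmetric adj;
  adj_irr : irreflexive adj;
  col_sym : forall x y, col x y = col y x
}.

Section Defs.
Variable T : finType.
Implicit Type G : ecgraph T.

Definition edges G : {set {set T}} :=
  [set E : {set T} | [exists x, exists y, adj G x y && (E == [set x; y])]].

Definition nedges G : nat := #|edges G|.

Definition colors_in G (A : {pred T}) : seq nat :=
  undup [seq col G p.1 p.2 | p <- enum [pred p : T * T |
           [&& adj G p.1 p.2, p.1 \in A & p.2 \in A]]].

Definition ncolors G : nat := size (colors_in G predT).

Definition ncolors_del G (v : T) : nat := size (colors_in G (predC1 v)).

Definition sat_deg G (v : T) : nat := ncolors G - ncolors_del G v.

Definition rainbow_triangle G (x y z : T) : Prop :=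
  [/\ adj G x y, adj G y z, adj G x z &
      [/\ col G x y != col G y z, col G x y != col G x z &
          col G y z != col G x z]].

Definition rainbow_triangle_free G : Prop :=
  forall x y z, ~ rainbow_triangle G x y z.

Definition complete G : Prop := forall x y : T, x != y -> adj G x y.
End Defs.

(* Main.v *)
Require Import Defs.
From mathcomp Require Import all_boot.
From mathcomp Require Import zify.
Set Implicit Arguments. Unset Strict Implicit. Unset Printing Implicit Defensive.

Section Aux.
Variables (T : finType) (G : ecgraph T).
Local Notation adj := (adj G).
Local Notation col := (col G).

Lemma colorsP (A : {pred T}) a :
  reflect (exists x y, [/\ adj x y, x \in A, y \in A & col x y = a]) (a \in colors_in G A).
Proof.
rewrite /colors_in mem_undup; apply: (iffP mapP).
  move=> [[x y]]; rewrite mem_enum inE /= => /and3P[? ? ?] ->; by exists x, y.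
move=> [x [y [? ? ? <-]]]; exists (x, y) => //; rewrite mem_enum inE /=; exact/and3P.
Qed.

Lemma colors_eq (A B : {pred T}) : A =i B -> colors_in G A = colors_in G B.
Proof.
move=> eAB; rewrite /colors_in; congr (undup (map _ _)); apply: eq_enum => p.
by rewrite !inE /= !eAB.
Qed.

Definition cA (A : {set T}) := size (colors_in G A).
Definition S (A : {set T}) v :=
  [seq a <- colors_in G A | a \notin colors_in G (A :\ v)].
Definition eA (A : {set T}) := #|[set E in edges G | E \subset A]|.
Definition nb v := [set x | adj v x].
Definition dg (A : {set T}) v := #|(A :\ v) :&: nb v|.
Definition nn (A : {set T}) v := #|(A :\ v) :\: nb v|.

Lemma S_uniq (A : {set T}) v : uniq (S A v).
Proof. exact/filter_uniq/undup_uniq. Qed.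

Lemma cA_rec (A : {set T}) v : cA A = cA (A :\ v) + size (S A v).
Proof.
rewrite /cA /S size_filter.
set s := colors_in G A; set t := colors_in G (A :\ v).
have sub : {subset t <= s}.
  move=> a /colorsP[x [y [? hx hy <-]]]; apply/colorsP; exists x, y; split=> //.
    by move: hx; rewrite !inE => /andP[].
  by move: hy; rewrite !inE => /andP[].
have pe : perm_eq (filter (mem t) s) t.
  apply: uniq_perm; [exact/filter_uniq/undup_uniq | exact: undup_uniq|].
  move=> a; rewrite mem_filter; apply/andP/idP => [[]//|h]; split=> //; exact: sub.
rewrite -(count_predC (mem t) s) -size_filter (perm_size pe).
congr (_ + _); apply: eq_count => a /=; by [].
Qed.

Lemma dg_nn (A : {set T}) v : v \in A -> dg A v + nn A v = #|A| - 1.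
Proof. move=> vA; rewrite /dg /nn cardsID (cardsD1 v A) vA; lia. Qed.

Lemma eA_rec  (A : {set T}) v : v \in A -> eA A = eA (A :\ v) + dg A v.
Proof.
move=> vA.
set P := [set E in edges G | E \subset A].
set B := [set E : {set T} | v \in E].
rewrite /eA -/P -(cardsID B P) addnC; congr (_ + _).
  apply: eq_card => E; rewrite !inE.
  apply/idP/idP => [/and3P[vE eE sEA]|/andP[eE sE]].
    rewrite eE /=; apply/subsetP => x xE; rewrite !inE (subsetP sEA) // andbT.
    by apply: contraNneq vE => <-.
  rewrite eE (subset_trans sE (subD1set A v)) andbT /=.
  rewrite andbT; apply/negP => vE; move: (subsetP sE v vE); by rewrite !inE eqxx.
have -> : P :&: B = (fun x => [set v; x]) @: ((A :\ v) :&: nb v).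
  apply/setP => E; rewrite !inE; apply/idP/imsetP.
    move=> /andP[/andP[eE sEA] vE].
    move: eE => /existsP[a /existsP[b /andP[ab /eqP dE]]].
    move: vE; rewrite dE !inE => /orP[] /eqP va; subst.
      exists b => //.
      rewrite !inE ab andbT (subsetP sEA) ?inE ?eqxx ?orbT // andbT.
      by apply: contraTneq ab => ->; rewrite adj_irr.
    exists a; last by rewrite setUC.
    rewrite !inE adj_sym ab andbT (subsetP sEA) ?inE ?eqxx ?orbT // andbT.
    by apply: contraTneq ab => ->; rewrite adj_irr.
  move=> [x]; rewrite !inE => /andP[/andP[xv xA] vx] ->.
  rewrite !inE eqxx andbT; apply/andP; split.
    by apply/existsP; exists v; apply/existsP; exists x; rewrite vx eqxx.
  by rewrite subUset !sub1set vA xA.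
apply: card_in_imset => x y; rewrite !inE => /andP[/andP[xv _] _] /andP[/andP[yv _] _] e.
have : x \in [set v; y] by rewrite -e !inE eqxx orbT.
by rewrite !inE (negbTE xv) => /eqP.
Qed.

End Aux.

Section Aux2.
Variables (T : finType) (G : ecgraph T).
Local Notation adj := (adj G).
Local Notation col := (col G).
Local Notation S := (S G).

Lemma rep (A : {set T}) v a : a \in S A v ->
  exists x, [/\ x \in A, adj v x & col v x = a].
Proof.
rewrite mem_filter => /andP[nt /colorsP[x [y [xy xA yA ea]]]].
case: (eqVneq x v) => [exv|xv]; first by subst x; rewrite -ea; exists y.
case: (eqVneq y v) => [eyv|yv].
  by subst y; rewrite -ea; exists x; rewrite adj_sym col_sym.
case/negP: nt; apply/colorsP; exists x, y; split=> //; by rewrite ?inE ?xv ?yv.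
Qed.

Lemma indep (A : {set T}) v x y : rainbow_triangle_free G ->
  x \in A -> y \in A -> adj v x -> adj v y ->
  col v x \in S A v -> col v y \in S A v -> col v x != col v y -> ~~ adj x y.
Proof.
move=> rtf xA yA vx vy sx sy nxy; apply/negP => xy.
have xv : x != v by apply: contraTneq vx => ->; rewrite adj_irr.
have yv : y != v by apply: contraTneq vy => ->; rewrite adj_irr.
have cin : col x y \in colors_in G (A :\ v).
  apply/colorsP; exists x, y; split=> //; by rewrite !inE ?xv ?yv.
apply: (rtf v x y); split=> //; split=> //.
- apply: contraTneq sx => ->; by rewrite mem_filter cin.
- apply: contraTneq sy => <-; by rewrite mem_filter cin.
Qed.

Lemma count_nn (A : {set T}) v x : rainbow_triangle_free G ->
  x \in A -> adj v x -> col v x \in S A v -> (size (S A v)).-1 <= nn G A x.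
Proof.
move=> rtf xA vx sx.
set B := [set y in A | adj v y && (col v y \in S A v) && (col v y != col v x)].
apply: (@leq_trans #|B|).
  rewrite -(size_rem sx) cardE -(size_map (col v)).
  apply: uniq_leq_size; first exact/rem_uniq/S_uniq.
  move=> b; rewrite mem_rem_uniq ?S_uniq // inE => /andP[bx sb].
  have [y [yA vy eb]] := rep sb; subst b.
  by apply: map_f; rewrite mem_enum !inE yA vy sb bx.
apply: subset_leq_card; apply/subsetP => y; rewrite !inE => /andP[yA /andP[/andP[vy sy] nyx]].
rewrite yA andbT -[adj x y]negbK (@indep A v x y rtf xA yA) //=; last by rewrite eq_sym.
by apply: contraNneq nyx => ->.
Qed.

Lemma key (A : {set T}) v0 : rainbow_triangle_free G -> v0 \in A ->
  exists2 v, v \in A & size (S A v) <= (nn G A v).+1.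
Proof.
move=> rtf v0A.
case: (@arg_maxnP _ v0 (mem A) (fun v => size (S A v)) v0A) => v vA maxv.
have [le1|gt1] := leqP (size (S A v)) 1.
  by exists v => //; apply: leq_trans le1 _.
case E: (S A v) gt1 => [|a s] // _.
have : a \in S A v by rewrite E mem_head.
move=> sa; have [x [xA vx cx]] := rep sa.
exists x => //.
have := count_nn rtf xA vx; rewrite cx => /(_ sa).
have := maxv x xA; rewrite E /=; lia.
Qed.

End Aux2.

Section Aux3.
Variables (T : finType) (G : ecgraph T).
Local Notation adj := (adj G).
Local Notation col := (col G).
Local Notation S := (S G).

Definition clique (A : {set T}) := forall x y, x \in A -> y \in A -> x != y -> adj x y.

Lemma base a : eA G [set a] = 0 /\ cA G [set a] = 0.
Proof.
split.
  apply/eqP; rewrite cards_eq0; apply/eqP/setP => E; rewrite !inE.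
  apply/negbTE/negP => /andP[/existsP[x /existsP[y /andP[xy /eqP dE]]] sE].
  have /set1P ex : x \in [set a] by apply: (subsetP sE); rewrite dE !inE eqxx.
  have /set1P ey : y \in [set a] by apply: (subsetP sE); rewrite dE !inE eqxx orbT.
  by subst; rewrite adj_irr in xy.
rewrite /cA; case E: (colors_in G [set a]) => [|b s] //.
have : b \in colors_in G [set a] by rewrite E mem_head.
move=> /colorsP[x [y [xy /set1P ex /set1P ey _]]]; by subst; rewrite adj_irr in xy.
Qed.

Lemma binrec n : 'C(n.+3, 2) = 'C(n.+2, 2) + n.+2.
Proof. by rewrite binS bin1. Qed.

Lemma binpos n : 0 < 'C(n.+2, 2).
Proof. by rewrite bin_gt0. Qed.

Lemma Erec (A : {set T}) v : v \in A ->
  eA G A + cA G A = eA G (A :\ v) + cA G (A :\ v) + dg G A v + size (S A v).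
Proof. move=> vA; rewrite (eA_rec G vA) (cA_rec G A v); lia. Qed.

Lemma bound n : rainbow_triangle_free G -> forall A : {set T}, #|A| = n.+1 ->
  eA G A + cA G A <= 'C(n.+2, 2) - 1 /\
  (eA G A + cA G A = 'C(n.+2, 2) - 1 -> clique A).
Proof.
move=> rtf; elim: n => [|n IH] A cA1.
  have /cards1P[a ->] : #|A| == 1 by rewrite cA1.
  have [-> ->] := base a; split=> // _ x y /set1P -> /set1P ->; by rewrite eqxx.
have [v0 v0A] : exists v0, v0 \in A.
  by apply/set0Pn; rewrite -card_gt0 cA1.
have [v vA dsv] := key rtf v0A.
have cD : #|A :\ v| = n.+1 by move: cA1; rewrite (cardsD1 v) vA; lia.
have [IH1 IH2] := IH _ cD.
have dn := dg_nn G vA; rewrite cA1 in dn.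
have br := binrec n; have bp := binpos n.
rewrite (Erec vA).
split; first lia.
move=> eq.
have cl : clique (A :\ v) by apply: IH2; lia.
have ds1 : size (S A v) <= 1.
  rewrite leqNgt; apply/negP => gt1.
  case E: (S A v) gt1 => [|a [|b s]] // _.
  have u := S_uniq G A v; move: u; rewrite E /= inE negb_or => /andP[/andP[ab _] _].
  have sa : a \in S A v by rewrite E mem_head.
  have sb : b \in S A v by rewrite E !inE eqxx orbT.
  have [x [xA vx cx]] := rep sa; have [y [yA vy cy]] := rep sb.
  subst a b.
  have := @indep T G A v x y rtf xA yA vx vy sa sb ab.
  have xv : x != v by apply: contraTneq vx => ->; rewrite adj_irr.
  have yv : y != v by apply: contraTneq vy => ->; rewrite adj_irr.
  rewrite cl ?inE ?xv ?yv //.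
  by apply: contraNneq ab => ->.
have nn0 : nn G A v = 0 by lia.
have e0 : (A :\ v) :\: nb G v = set0 by apply/eqP; rewrite -cards_eq0; apply/eqP; exact: nn0.
have adjv : forall y, y \in A -> y != v -> adj v y.
  move=> y yA yv; apply/negPn/negP => nvy.
  have : y \in (A :\ v) :\: nb G v by rewrite !inE nvy yv yA.
  by rewrite e0 inE.
move=> x y xA yA xy.
case: (eqVneq x v) => [exv|xv]; first by subst x; apply: adjv; rewrite // eq_sym.
case: (eqVneq y v) => [eyv|yv]; first by subst y; rewrite adj_sym; apply: adjv.
by apply: cl; rewrite // !inE ?xv ?yv.
Qed.
End Aux3.

Theorem lemma2 (T : finType) (G : ecgraph T) :
  2 <= #|T| ->
  nedges G + ncolors G = 'C(#|T|.+1, 2) - 1 ->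
  rainbow_triangle_free G ->
  complete G /\ exists u : T, sat_deg G u = 1.
Proof.
move=> n2 eq rtf.
have eT : eA G [set: T] = nedges G.
  by rewrite /eA /nedges; apply: eq_card => E; rewrite !inE subsetT andbT.
have cT : cA G [set: T] = ncolors G.
  by rewrite /cA /ncolors; congr size; apply: colors_eq => x; rewrite !inE.
have cDT v : cA G ([set: T] :\ v) = ncolors_del G v.
  by rewrite /cA /ncolors_del; congr size; apply: colors_eq => x; rewrite !inE andbT.
have [m em] : exists m, #|T| = m.+2 by exists (#|T| - 2); lia.
have cardT : #|[set: T]| = m.+2 by rewrite cardsT.
have [b1 b2] := bound rtf cardT.
rewrite eT cT em in b2 eq.
have cl := b2 eq.
have comp : complete G by move=> x y xy; apply: cl; rewrite ?inE.
split=> //.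
have [v0 _] : exists2 v0 : T, v0 \in [set: T] & true.
  have /set0Pn[v0 h] : [set: T] != set0 by rewrite -card_gt0 cardT.
  by exists v0.
have [v _ dsv] := key rtf (in_setT v0).
exists v.
have vT := in_setT v.
have nn0 : nn G [set: T] v = 0.
  apply/eqP; rewrite cards_eq0; apply/eqP/setP => x; rewrite !inE.
  case: (eqVneq x v) => [->|xv] /=; first by rewrite andbF.
  by rewrite comp // eq_sym.
have dn := dg_nn G vT; rewrite cardT nn0 in dn.
have cD : #|[set: T] :\ v| = m.+1 by move: cardT; rewrite (cardsD1 v) vT; lia.
have [c1 _] := bound rtf cD.
have er := Erec G vT; rewrite eT cT eq in er.
have br := binrec m; have bp := binpos m.
rewrite /sat_deg -cDT -cT (cA_rec G [set: T] v).
rewrite nn0 in dsv.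
lia.
Qed.
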